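(* (1) For every $2\le n<\omega$, the algebra $K_n$ is a simple regular pseudocomplemented Kleene algebra of range $2$, i.e. a simple algebra of $\mathbf{K}_2$. (2) For $2\le n,m<\omega$, if $K_n$ is isomorphic to a subalgebra of $K_m$, then $n=m$.
   Context: For $2\le n<\omega$ let $A_n=\{a_i:0\le i<n\}$, $B_n=\{b_i:0\le i<n\}$ be disjoint, $S_n=A_n\cup B_n$, and $\zeta(S_n)$ a disjoint copy of $S_n$, with $\zeta$ interchanging each $s\in S_n$ and its copy $\zeta(s)$. $P_n=S_n\cup\zeta(S_n)$ (discrete topology) is ordered by the partial order whose only strict comparabilities are, for $0\le i,j<n$: $a_i<\zeta(a_j)$, $b_i<\zeta(b_j)$, $a_i<\zeta(b_j)$ iff $i\ne j$, $b_i<\zeta(a_j)$ iff $i\ne j$. $K_n$ is the dual algebra of $P_n$: the decreasing subsets $X$ of $P_n$ with $\cap,\cup,\emptyset,P_n$, $X^\ast=P_n\setminus[X)$ and $X'=P_n\setminus\zeta(X)$. $\mathbf{K}_2$ is the variety of pseudocomplemented de Morgan algebras (bounded distributive lattice with pseudocomplement ${}^\ast$ and de Morgan involution ${}^\prime$) satisfying $x\wedge x^{\prime\ast\prime}\le y\vee y^\ast$, $x\wedge x'\le y\vee y'$, and $(x\wedge x^{\prime\ast})^{2(\prime\ast)}=(x\wedge x^{\prime\ast})^{3(\prime\ast)}$, where $x^{0(\prime\ast)}=x$, $x^{(k+1)(\prime\ast)}=((x^{k(\prime\ast)})')^\ast$. *)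

(* Defs.v *)
From HB Require Import structures.
From mathcomp Require Import all_boot.
Set Implicit Arguments. Unset Strict Implicit. Unset Printing Implicit Defensive.

(* A pseudocomplemented de Morgan algebra signature:
   (L; join, meet, bot, top, pseudocomplement *, de Morgan involution ') *)
Record pdmAlg := PdmAlg {
  car :> Type;
  jn : car -> car -> car;
  mt : car -> car -> car;
  bt : car;
  tp : car;
  st : car -> car;
  pr : car -> car
}.

Definition ale (A : pdmAlg) (x y : A) : Prop := mt x y = x.

Definition pst_iter (A : pdmAlg) (k : nat) (x : A) : A := iter k (fun y => st (pr y)) x.

Definition in_K2 (A : pdmAlg) : Prop :=
  (forall x y z : A, jn x (jn y z) = jn (jn x y) z) /\
  (forall x y z : A, mt x (mt y z) = mt (mt x y) z) /\
  (forall x y : A, jn x y = jn y x) /\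
  (forall x y : A, mt x y = mt y x) /\
  (forall x y : A, jn x (mt x y) = x) /\
  (forall x y : A, mt x (jn x y) = x) /\
  (forall x y z : A, mt x (jn y z) = jn (mt x y) (mt x z)) /\
  (forall x : A, jn x (bt A) = x) /\
  (forall x : A, mt x (tp A) = x) /\
  (forall x y : A, mt x y = bt A <-> ale y (st x)) /\
  (forall x : A, pr (pr x) = x) /\
  (forall x y : A, pr (jn x y) = mt (pr x) (pr y)) /\
  (forall x y : A, ale (mt x (pr (st (pr x)))) (jn y (st y))) /\
  (forall x y : A, ale (mt x (pr x)) (jn y (pr y))) /\
  (forall x : A, pst_iter 2 (mt x (st (pr x))) = pst_iter 3 (mt x (st (pr x)))).

Definition congruence (A : pdmAlg) (R : A -> A -> Prop) : Prop :=
  (forall x, R x x) /\ (forall x y, R x y -> R y x) /\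
  (forall x y z, R x y -> R y z -> R x z) /\
  (forall x y u v, R x y -> R u v -> R (jn x u) (jn y v)) /\
  (forall x y u v, R x y -> R u v -> R (mt x u) (mt y v)) /\
  (forall x y, R x y -> R (st x) (st y)) /\
  (forall x y, R x y -> R (pr x) (pr y)).

Definition simple_alg (A : pdmAlg) : Prop :=
  (exists x y : A, x <> y) /\
  forall R : A -> A -> Prop, @congruence A R -> (forall x y, R x y -> x = y) \/ (forall x y, R x y).

(* homomorphisms; A is isomorphic to a subalgebra of B iff there is an injective hom *)
Definition is_hom (A B : pdmAlg) (f : A -> B) : Prop :=
  (forall x y, f (jn x y) = jn (f x) (f y)) /\
  (forall x y, f (mt x y) = mt (f x) (f y)) /\
  f (bt A) = bt B /\ f (tp A) = tp B /\
  (forall x, f (st x) = st (f x)) /\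
  (forall x, f (pr x) = pr (f x)).

Definition embeds (A B : pdmAlg) : Prop :=
  exists f : A -> B, @is_hom A B f /\ injective f.

(* An element (c, (l, i)) : P n stands for:
     c = false : an element of S_n,  c = true : its copy zeta(.)
     l = false : letter a,           l = true : letter b
     i         : the index in {0,...,n-1}.  *)
Definition P (n : nat) : finType := (bool * (bool * 'I_n))%type.

Definition zeta n (x : P n) : P n := (~~ x.1, x.2).

Definition leP n (x y : P n) : bool :=
  (x == y) || [&& ~~ x.1, y.1 & (x.2.1 == y.2.1) || (x.2.2 != y.2.2)].

Definition downset n (X : {set P n}) : bool :=
  [forall x, forall y, ((y \in X) && leP x y) ==> (x \in X)].

Definition upgen n (X : {set P n}) : {set P n} := [set x | [exists y in X, leP y x]].

Definition Kst n (X : {set P n}) : {set P n} := ~: upgen X.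
Definition Kpr n (X : {set P n}) : {set P n} := ~: (@zeta n @: X).

Lemma zetaK n : involutive (@zeta n).
Proof. by case=> c [l i]; rewrite /zeta /= negbK. Qed.

Lemma mem_zeta n (X : {set P n}) y : (y \in @zeta n @: X) = (zeta y \in X).
Proof.
apply/imsetP/idP => [[x Hx ->]|H]; first by rewrite zetaK.
by exists (zeta y); rewrite ?zetaK.
Qed.

Lemma leP_trans n (x y z : P n) : leP x y -> leP y z -> leP x z.
Proof.
rewrite /leP; case/orP=> [/eqP -> //|H].
case/orP=> [/eqP <- |/and3P [H3 _ _]]; first by rewrite H orbT.
by case/and3P: H => _ H2 _; rewrite H2 in H3.
Qed.

Lemma leP_zeta n (x y : P n) : leP x y -> leP (zeta y) (zeta x).
Proof.
rewrite /leP; case/orP=> [/eqP -> //|/and3P [H1 H2 H3]]; first by rewrite eqxx.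
rewrite /zeta /= H1 H2 /= (eq_sym y.2.1) (eq_sym y.2.2). exact: H3.
Qed.

Lemma down_set0 n : downset (set0 : {set P n}).
Proof. rewrite /downset; by apply/forallP=> x; apply/forallP=> y; rewrite in_set0. Qed.

Lemma down_setT n : downset (setT : {set P n}).
Proof. rewrite /downset; by apply/forallP=> x; apply/forallP=> y; rewrite !in_setT implybT. Qed.

Lemma downP n (X : {set P n}) : downset X -> forall x y, y \in X -> leP x y -> x \in X.
Proof. by move=> /forallP H x y Hy Hxy; move: (forallP (H x) y); rewrite Hy Hxy. Qed.

Lemma downI n (X Y : {set P n}) : downset X -> downset Y -> downset (X :&: Y).
Proof.
move=> HX HY; rewrite /downset; apply/forallP=> x; apply/forallP=> y; apply/implyP.
case/andP; rewrite !inE => /andP [H1 H2] H.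
by rewrite (downP HX H1 H) (downP HY H2 H).
Qed.

Lemma downU n (X Y : {set P n}) : downset X -> downset Y -> downset (X :|: Y).
Proof.
move=> HX HY; rewrite /downset; apply/forallP=> x; apply/forallP=> y; apply/implyP.
case/andP; rewrite !inE => /orP [H1|H1] H.
  by rewrite (downP HX H1 H).
by rewrite (downP HY H1 H) orbT.
Qed.

Lemma down_st n (X : {set P n}) : downset (Kst X).
Proof.
rewrite /downset; apply/forallP=> x; apply/forallP=> y; apply/implyP.
rewrite /Kst /upgen !inE => /andP [Hy Hxy]; apply: contra Hy.
case/existsP=> z /andP [Hz Hzx]; apply/existsP; exists z.
by rewrite Hz (leP_trans Hzx Hxy).
Qed.

Lemma down_pr n (X : {set P n}) : downset X -> downset (Kpr X).
Proof.
move=> HX; rewrite /downset; apply/forallP=> x; apply/forallP=> y; apply/implyP.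
rewrite /Kpr !inE !mem_zeta => /andP [Hy Hxy]; apply: contra Hy => Hx.
exact: downP HX _ _ Hx (leP_zeta Hxy).
Qed.

Definition Kcar (n : nat) := {X : {set P n} | downset X}.

Definition Kalg (n : nat) : pdmAlg :=
  @PdmAlg (Kcar n)
    (fun X Y => exist _ (proj1_sig X :|: proj1_sig Y) (downU (proj2_sig X) (proj2_sig Y)))
    (fun X Y => exist _ (proj1_sig X :&: proj1_sig Y) (downI (proj2_sig X) (proj2_sig Y)))
    (exist _ set0 (@down_set0 n))
    (exist _ setT (@down_setT n))
    (fun X => exist _ (Kst (proj1_sig X)) (down_st (proj1_sig X)))
    (fun X => exist _ (Kpr (proj1_sig X)) (down_pr (proj2_sig X))).

(* Main.v *)
Require Import Defs.
From mathcomp Require Import all_boot.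
From Stdlib Require Import Classical.
Local Notation lq := Defs.leP.
Set Implicit Arguments. Unset Strict Implicit. Unset Printing Implicit Defensive.

Definition sv n (X : Kalg n) : {set P n} := proj1_sig X.
Lemma svD n (X : Kalg n) : downset (sv X).
Proof. exact: (proj2_sig X). Qed.
Lemma sv_inj n (X Y : Kalg n) : sv X = sv Y -> X = Y.
Proof.
move: X Y => [X hX] [Y hY]; rewrite /sv /= => E; subst Y.
by rewrite (bool_irrelevance hX hY).
Qed.

Lemma leP_min n (x y : P n) : x.1 = false -> lq y x -> y = x.
Proof. rewrite /Defs.leP => h /orP [/eqP E|/and3P [_ h2 _]]; first exact: E. by rewrite h in h2. Qed.
Lemma leP_refl n (x : P n) : lq x x. Proof. by rewrite /Defs.leP eqxx. Qed.
Lemma leP_ne n (x y : P n) : lq y x -> y != x -> (y.1 = false) /\ (x.1 = true).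
Proof.
rewrite /Defs.leP => /orP [/eqP E|/and3P [h1 h2 _]] hne; first by rewrite E eqxx in hne.
by split; [apply/negbTE|].
Qed.
Lemma leP_mM n l i l' j : lq ((false,(l,i)) : P n) (true,(l',j)) = (l == l') || (i != j).
Proof. by rewrite /Defs.leP. Qed.
Lemma leP_MM n l i c l' j : lq ((true,(l,i)) : P n) (c,(l',j)) = ((true,(l,i)) == (c,(l',j))).
Proof. by rewrite /Defs.leP /= orbF. Qed.
Lemma leP_self n (x : P n) : lq (false, x.2) (true, x.2).
Proof. by case: x => c [l i]; rewrite leP_mM eqxx. Qed.

Lemma mem_st n (X : {set P n}) x : (x \in Kst X) = ~~ [exists y in X, lq y x].
Proof. by rewrite !inE. Qed.
Lemma mem_pr n (X : {set P n}) x : (x \in Kpr X) = (zeta x \notin X).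
Proof. by rewrite inE mem_zeta. Qed.

Lemma mem_stpr n (W : {set P n}) x :
  (x \in Kst (Kpr W)) = [forall q, lq q x ==> (zeta q \in W)].
Proof.
rewrite mem_st negb_exists; apply: eq_forallb => q.
by rewrite mem_pr negb_and negbK implybE orbC.
Qed.

Lemma svE_jn n (X Y : Kalg n) : sv (jn X Y) = sv X :|: sv Y. Proof. by []. Qed.
Lemma svE_mt n (X Y : Kalg n) : sv (mt X Y) = sv X :&: sv Y. Proof. by []. Qed.
Lemma svE_bt n : sv (bt (Kalg n)) = set0. Proof. by []. Qed.
Lemma svE_tp n : sv (tp (Kalg n)) = setT. Proof. by []. Qed.
Lemma svE_st n (X : Kalg n) : sv (st X) = Kst (sv X). Proof. by []. Qed.
Lemma svE_pr n (X : Kalg n) : sv (pr X) = Kpr (sv X). Proof. by []. Qed.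
Definition svE := (svE_jn, svE_mt, svE_bt, svE_tp, svE_st, svE_pr).

Lemma pc_law n (x y : Kalg n) : mt x y = bt (Kalg n) <-> ale y (st x).
Proof.
rewrite /ale; split => [h|h].
- have h' : sv x :&: sv y = set0 by rewrite -svE h.
  apply: sv_inj; rewrite !svE; apply/setP => z; rewrite !inE.
  case hz: (z \in sv y) => //=; apply/negP => /existsP [w /andP [hw hwz]].
  have : w \in sv x :&: sv y by rewrite inE hw (downP (svD y) hz hwz).
  by rewrite h' inE.
- apply: sv_inj; rewrite !svE; apply/setP => z; rewrite !inE.
  apply/negP => /andP [hx hy].
  have : z \in sv (mt y (st x)) by rewrite h.
  rewrite !svE inE hy /= mem_st => /negP; apply.
  by apply/existsP; exists z; rewrite hx leP_refl.
Qed.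

Lemma K2_id1 n (x y : Kalg n) : ale (mt x (pr (st (pr x)))) (jn y (st y)).
Proof.
apply: sv_inj; rewrite !svE; apply/setP => z.
rewrite !in_setI in_setU mem_pr !mem_st negbK; apply/andb_idr => /andP [hz hz2].
case hy: (z \in sv y) => //=; apply/negP => /existsP [w /andP [hw hwz]].
have hne : w != z by apply: contraNneq (negbT hy) => <-.
have [_ hz1] := leP_ne hwz hne.
move: hz2 => /existsP [q /andP [hq hqz]].
have hzm : (zeta z).1 = false by rewrite /zeta /= hz1.
rewrite (leP_min hzm hqz) mem_pr zetaK in hq.
by rewrite hz in hq.
Qed.

Lemma K2_id2 n (x y : Kalg n) : ale (mt x (pr x)) (jn y (pr y)).
Proof.
apply: sv_inj; rewrite !svE; apply/setP => z.
rewrite !in_setI in_setU !mem_pr; apply/andb_idr => /andP [hz hz2].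
case hy: (z \in sv y) => //=; apply/negP => /negPn hy2.
case: z hz hz2 hy hy2 => [[] li] hz hz2 hy hy2.
- have : (false, li) \in sv x.
    by apply: (downP (svD x) hz); case: li {hz hz2 hy hy2} => l i; rewrite leP_mM eqxx.
  by rewrite /zeta /= in hz2; move=> h; rewrite h in hz2.
- have : (false, li) \in sv y.
    rewrite /zeta /= negbK in hy2; apply: (downP (svD y) hy2); case: li {hz hz2 hy hy2} => l i; rewrite leP_mM eqxx //.
  by rewrite hy.
Qed.
Definition other n (hn : 2 <= n) (i : 'I_n) : 'I_n :=
  if val i == 0 then Ordinal hn else Ordinal (leq_trans (isT : 0 < 2) hn).
Lemma otherP n (hn : 2 <= n) (i : 'I_n) : other hn i != i.
Proof.
rewrite /other; case: i => [k hk] /=; case: ifP => /eqP h; apply/eqP => /(f_equal val) /= e; by subst k.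
Qed.

Lemma G_T n : Kst (Kpr (setT : {set P n})) = setT.
Proof. by apply/setP => x; rewrite mem_stpr inE; apply/forallP => q; rewrite inE implybT. Qed.

Lemma G_nomax n (W : {set P n}) : (forall x : P n, x.1 -> x \notin W) -> Kst (Kpr W) = set0.
Proof.
move=> hW; apply/setP => x; rewrite mem_stpr inE; apply/negP => /forallP H.
have h1 := implyP (H x) (leP_refl x).
case: x H h1 => [[] li] H h1.
- have := implyP (H (false, li)); rewrite /zeta /=.
  case: li {H h1} => l i; rewrite leP_mM eqxx => /(_ isT) h.
  by move: (hW (true, (l, i)) isT); rewrite h.
- by rewrite /zeta /= in h1; move: (hW (true, li) isT); rewrite h1.
Qed.

Lemma neg_cond n (l l' : bool) (i j : 'I_n) : ((l == l') || (i != j)) = false -> l' = ~~ l /\ j = i.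
Proof. by case: l; case: l' => //= /eqP. Qed.

Lemma G_max n (hn : 2 <= n) (X : {set P n}) (p : P n) : downset X -> p.1 ->
  p \in Kst (Kpr (X :&: Kst (Kpr X))) -> X :&: Kst (Kpr X) = setT.
Proof.
set Z := X :&: Kst (Kpr X) => hX; case: p => [[] [l i]] //= _.
rewrite mem_stpr => /forallP H.
have hZX : forall x, x \in Z -> x \in X by move=> x; rewrite inE => /andP [].
have HZ : forall l' j, (l == l') || (i != j) -> (true, (l', j)) \in Z.
  move=> l' j h; have := implyP (H (false, (l', j))); rewrite leP_mM (eq_sym l') (eq_sym j) h; by apply.
have st1 : (true, (~~ l, i)) \in X.
  have := HZ l (other hn i); rewrite eqxx => /(_ isT).
  rewrite inE mem_stpr => /andP [_ /forallP /(_ (false, (~~ l, i)))].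
  rewrite leP_mM (eq_sym i) otherP orbT; by apply.
have st2 : forall l' j, (true, (l', j)) \in Z.
  move=> l' j; case h: ((l == l') || (i != j)); first exact: HZ.
  move: (neg_cond h) => [e1 e2]; rewrite e1 e2.
  rewrite inE st1 mem_stpr /=; apply/forallP => [[[] [l2 j2]]]; apply/implyP.
  - rewrite leP_MM => /eqP [-> ->]; apply: (downP hX st1).
    by rewrite /zeta /= leP_mM eqxx.
  - rewrite leP_mM /zeta /= => h2.
    case h3: ((l == l2) || (i != j2)); first by apply: hZX; apply: HZ.
    move: (neg_cond h3) => [e3 e4]; rewrite e3 e4.
    exact: st1.
have hZd : downset Z by apply: downI => //; apply: down_st.
apply/setP => [[c [l' j]]]; rewrite in_setT; case: c; first exact: st2.
apply: (downP hZd (st2 l' j)); by rewrite leP_mM eqxx.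
Qed.

Lemma K2_id3 n (hn : 2 <= n) (x : Kalg n) :
  pst_iter 2 (mt x (st (pr x))) = pst_iter 3 (mt x (st (pr x))).
Proof.
apply: sv_inj; rewrite /pst_iter /=; rewrite -/(sv x).
case: (boolP [exists p, p.1 && (p \in Kst (Kpr (sv x :&: Kst (Kpr (sv x)))))]).
- case/existsP => p /andP [hp1 hp]; rewrite (G_max hn (svD x) hp1 hp).
  by rewrite !G_T.
- rewrite negb_exists => /forallP H.
  have H1 : forall y : P n, y.1 -> y \notin Kst (Kpr (sv x :&: Kst (Kpr (sv x)))).
    by move=> y hy; have := H y; rewrite hy.
  rewrite (G_nomax H1) (G_nomax (W := set0)) //.
  by move=> y _; rewrite inE.
Qed.

Lemma inK2 n (hn : 2 <= n) : in_K2 (Kalg n).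
Proof.
have E := @sv_inj n.
split; first by move=> *; apply: E; rewrite !svE setUA.
split; first by move=> *; apply: E; rewrite !svE setIA.
split; first by move=> *; apply: E; rewrite !svE setUC.
split; first by move=> *; apply: E; rewrite !svE setIC.
split; first by move=> *; apply: E; rewrite !svE setIC setKI.
split; first by move=> *; apply: E; rewrite !svE setUC setKU.
split; first by move=> *; apply: E; rewrite !svE setIUr.
split; first by move=> *; apply: E; rewrite !svE setU0.
split; first by move=> *; apply: E; rewrite !svE setIT.
split; first exact: pc_law.
split; first by move=> X; apply: E; apply/setP => z; rewrite !svE !mem_pr zetaK negbK.
split; first by move=> X Y; apply: E; apply/setP => z; rewrite !svE !in_setI !mem_pr in_setU negb_or.
split; first exact: K2_id1.
split; first exact: K2_id2.
exact: K2_id3.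
Qed.
Lemma down_atom n (li : bool * 'I_n) : downset [set ((false, li) : P n)].
Proof.
rewrite /downset; apply/forallP => x; apply/forallP => y; apply/implyP.
by case/andP => /set1P -> h; rewrite (@leP_min n (false, li) x erefl h) set11.
Qed.
Definition atom n (li : bool * 'I_n) : Kalg n := exist (fun X => downset X) _ (down_atom li).

Lemma T_mem n (W : Kalg n) x : (x \in sv (pr (st W))) = [exists y in sv W, lq y (zeta x)].
Proof. by rewrite svE mem_pr svE mem_st negbK. Qed.

Lemma T3 n (hn : 2 <= n) (li : bool * 'I_n) :
  pr (st (pr (st (pr (st (atom li)))))) = tp (Kalg n).
Proof.
apply: sv_inj; rewrite svE; apply/setP => [[c [l1 j]]]; rewrite in_setT T_mem.
case: li => l i.
have T1 : forall l2 k, (l == l2) || (i != k) -> (false, (l2, k)) \in sv (pr (st (atom (l, i)))).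
  move=> l2 k h; rewrite T_mem; apply/existsP; exists (false, (l, i)).
  by rewrite /atom /sv /= set11 /zeta /= leP_mM.
have T2 : forall l' j', (false, (l', j')) \in sv (pr (st (pr (st (atom (l, i)))))).
  move=> l' j'; rewrite T_mem.
  case h: ((l == l') || (i != j')).
    apply/existsP; exists (false, (l', j')); rewrite T1 //=.
    by rewrite /zeta /= leP_mM eqxx.
  move: (neg_cond h) => [e1 e2]; subst.
  apply/existsP; exists (false, (l, other hn i)); rewrite T1 ?eqxx //=.
  by rewrite /zeta /= leP_mM otherP orbT.
apply/existsP; exists (false, (l1, j)); rewrite T2 /=.
by case: c; rewrite /zeta /= ?leP_mM ?eqxx ?leP_refl.
Qed.

Lemma K_nontriv n (hn : 2 <= n) : exists x y : Kalg n, x <> y.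
Proof.
exists (bt (Kalg n)), (tp (Kalg n)) => h.
have := f_equal (@sv n) h; rewrite !svE => /setP /(_ (false, (false, Ordinal (leq_trans (isT : 0 < 2) hn)))).
by rewrite !inE.
Qed.

Lemma simpleK n (hn : 2 <= n) : simple_alg (Kalg n).
Proof.
split; first exact: K_nontriv.
move=> R [Rr [Rs [Rt [Rj [Rm [Rst Rpr]]]]]].
case: (classic (exists x y, R x y /\ x <> y)) => [[x [y [Hxy Hne]]]|H]; last first.
  left => x y hxy; apply: NNPP => hne; apply: H; by exists x, y.
right.
(* find a minimal point in the symmetric difference *)
have [li [u [v [Ruv Hd]]]] : exists li, exists u v, R u v /\
    (((false, li) : P n) \in sv u) != ((false, li) \in sv v).
  case: (boolP [exists p, (p \in sv x) != (p \in sv y)]).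
    case/existsP => [[[] li] hp].
      exists li, (pr x), (pr y); split; first exact: Rpr.
      rewrite !svE !mem_pr /zeta /=.
      by move: hp; case: ((true, li) \in sv x); case: ((true, li) \in sv y).
    by exists li, x, y.
  rewrite negb_exists => /forallP hall; exfalso; apply: Hne; apply: sv_inj.
  by apply/setP => p; move: (hall p); rewrite negbK => /eqP.
have R0 : R (bt (Kalg n)) (atom li).
  have Rm' := Rm _ _ _ _ Ruv (Rr (atom li)).
  have E1 : forall w : Kalg n, ((false, li) \in sv w) -> mt w (atom li) = atom li.
    move=> w hw; apply: sv_inj; rewrite svE; apply/setP => z; rewrite !inE.
    by apply/andb_idl => /eqP ->.
  have E0 : forall w : Kalg n, ((false, li) \notin sv w) -> mt w (atom li) = bt _.
    move=> w hw; apply: sv_inj; rewrite !svE; apply/setP => z; rewrite !inE.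
    by apply/negP => /andP [h /eqP e]; subst z; rewrite h in hw.
  case hu: ((false, li) \in sv u); rewrite hu in Hd.
    by rewrite (E1 _ hu) (E0 v Hd) in Rm'; apply: Rs.
  by rewrite (E0 _ (negbT hu)) (E1 v (negbNE Hd)) in Rm'.
have HTr : forall W, R (bt (Kalg n)) W -> R (bt (Kalg n)) (pr (st W)).
  move=> W hW; have := Rpr _ _ (Rst _ _ hW).
  have -> // : pr (st (bt (Kalg n))) = bt (Kalg n).
  apply: sv_inj; rewrite !svE; apply/setP => z; rewrite mem_pr !inE.
  rewrite negbK; apply/negbTE; rewrite negb_exists; apply/forallP => w; by rewrite inE.

have R1 : R (bt (Kalg n)) (tp (Kalg n)).
  have := HTr _ (HTr _ (HTr _ R0)); by rewrite (T3 hn li).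
have Rb : forall a, R a (bt (Kalg n)).
  move=> a; have := Rm _ _ _ _ (Rr a) (Rs _ _ R1).
  have -> : mt a (tp (Kalg n)) = a by apply: sv_inj; rewrite !svE setIT.
  have -> // : mt a (bt (Kalg n)) = bt _ by apply: sv_inj; rewrite !svE setI0.
move=> a b; apply: (Rt _ _ _ (Rb a)); exact: Rs.
Qed.
Lemma two_min m (W : {set P m}) u v : (false, u) \in W -> (false, v) \in W -> u != v ->
  Kst (Kpr (Kst W)) = set0.
Proof.
move=> hu hv huv; apply/setP => [[c [l i]]]; rewrite in_set0 mem_stpr; apply/negbTE.
rewrite negb_forall; apply/existsP; exists (false, (l, i)); rewrite negb_imply.
apply/andP; split; first by case: c; rewrite ?leP_refl ?leP_mM ?eqxx.
rewrite /zeta /= mem_st negbK.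
case: u hu huv => lu iu hu huv.
case h1: ((lu == l) || (iu != i)).
  by apply/existsP; exists (false, (lu, iu)); rewrite hu leP_mM.
case: v hv huv => lv iv hv huv.
case h2: ((lv == l) || (iv != i)).
  by apply/existsP; exists (false, (lv, iv)); rewrite hv leP_mM.
have [e1 e2] : l = ~~ lu /\ i = iu.
  by apply: neg_cond; move: h1; rewrite eq_sym (eq_sym iu).
have [e3 e4] : l = ~~ lv /\ i = iv.
  by apply: neg_cond; move: h2; rewrite eq_sym (eq_sym iv).
exfalso; move: huv; rewrite -e2 -e4.
have -> : lu = lv by apply: negb_inj; rewrite -e1 -e3.
by rewrite eqxx.
Qed.

Lemma atom_sps_ne n (li : bool * 'I_n) : st (pr (st (atom li))) <> bt (Kalg n).
Proof.
move=> h; have := f_equal (@sv n) h; rewrite !svE => /setP /(_ (false, (~~ li.1, li.2))).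
rewrite in_set0 mem_stpr; move/negbT; apply/negP/negPn/forallP => q; apply/implyP => hq.
rewrite (@leP_min n (false, (~~ li.1, li.2)) q erefl hq) /zeta /= mem_st; apply/negP => /existsP [w /andP [hw hwz]].
move: hw; rewrite /atom /sv /= => /set1P e; subst w.
by move: hwz; clear h hq; case: li => l i /=; rewrite leP_mM eqxx orbF; case: l.
Qed.

Definition bj n (s : seq (Kalg n)) : Kalg n := foldr (@jn (Kalg n)) (bt (Kalg n)) s.
Lemma bj_mem n (s : seq (Kalg n)) x : (x \in sv (bj s)) = has (fun X => x \in sv X) s.
Proof. elim: s => [|X s IH] /=; first by rewrite inE. by rewrite in_setU -IH. Qed.

Lemma partB n m (hn : 2 <= n) (hm : 2 <= m) : embeds (Kalg n) (Kalg m) -> n = m.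
Proof.
move=> [f [[fj [fm [fb [ft [fst fpr]]]]] finj]].
have nz : forall li : bool * 'I_n, exists u, (false, u) \in sv (f (atom li)).
  move=> li; have : sv (f (atom li)) != set0.
    apply/eqP => h; have : f (atom li) = f (bt _) by rewrite fb; apply: sv_inj.
    move/finj/(f_equal (@sv n)) => /setP /(_ (false, li)); by rewrite /atom /sv /= set11 inE.
  case/set0Pn => -[c u] hx; exists u; case: c hx => // hx.
  apply: (downP (svD _) hx); exact: (leP_self (true, u)).
have uniq1 : forall li u v, (false, u) \in sv (f (atom li)) -> (false, v) \in sv (f (atom li)) -> u = v.
  move=> li u v hu hv; apply/eqP; apply: contraT => huv.
  have h := two_min hu hv huv.
  exfalso; apply: (@atom_sps_ne n li); apply: finj; rewrite fst fpr fst fb.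
  by apply: sv_inj; rewrite !svE h.
have disj : forall li lj u, (false, u) \in sv (f (atom li)) -> (false, u) \in sv (f (atom lj)) -> li = lj.
  move=> li lj u hi hj; apply/eqP; apply: contraT => hne.
  have : mt (atom li) (atom lj) = bt (Kalg n).
    apply: sv_inj; rewrite !svE; apply/setP => z; rewrite !inE /atom /sv /= ?inE.
    apply/negP => /andP [/eqP -> /eqP [e]]; by rewrite e eqxx in hne.
  move/(f_equal f); rewrite fm fb => /(f_equal (@sv m)); rewrite !svE => /setP /(_ (false, u)).
  by rewrite !inE hi hj.
set Min := bj (map (@atom n) (enum (predT : pred (bool * 'I_n)))).
have cover : forall u, exists li, (false, u) \in sv (f (atom li)).
  have hst : st Min = bt (Kalg n).
    apply: sv_inj; rewrite !svE; apply/setP => z; rewrite mem_st inE negbK.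
    apply/existsP; exists (false, z.2); rewrite bj_mem; apply/andP; split.
      apply/hasP; exists (atom z.2); first by apply: map_f; rewrite mem_enum.
      by rewrite /atom /sv /= set11.
    by case: z => [[] li]; rewrite ?leP_refl ?leP_self.
  have fMin : forall s, f (bj s) = bj (map f s).
    by elim => [|X s IH] /=; rewrite ?fb // fj IH.
  move=> u; have := f_equal (@sv m) (f_equal f hst); rewrite fst fb !svE.
  move=> /setP /(_ (false, u)); rewrite mem_st inE negbK => /existsP [w /andP [hw hwu]].
  rewrite (@leP_min m (false, u) w erefl hwu) fMin bj_mem -map_comp in hw.
  by case/hasP: hw => X /mapP [li _ ->] /= h; exists li.
pose g (li : bool * 'I_n) : bool * 'I_m :=
  odflt (false, Ordinal (leq_trans (isT : 0 < 2) hm)) [pick u | (false, u) \in sv (f (atom li))].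
have gP : forall li, (false, g li) \in sv (f (atom li)).
  move=> li; rewrite /g; case: pickP => [u hu //|h0].
  by case: (nz li) => u hu; rewrite h0 in hu.
pose h (u : bool * 'I_m) : bool * 'I_n :=
  odflt (false, Ordinal (leq_trans (isT : 0 < 2) hn)) [pick li | (false, u) \in sv (f (atom li))].
have hP : forall u, (false, u) \in sv (f (atom (h u))).
  move=> u; rewrite /h; case: pickP => [li hl //|h0].
  by case: (cover u) => li hl; rewrite h0 in hl.
have ginj : injective g.
  move=> li lj e; apply: (disj li lj (g li)); first exact: gP.
  rewrite e; exact: gP.
have hinj : injective h.
  move=> u v e; apply: (uniq1 (h u)); first exact: hP.
  rewrite e; exact: hP.
have c1 := @leq_card _ _ g ginj; have c2 := @leq_card _ _ h hinj.
move: c1 c2; rewrite !card_prod !card_bool !card_ord => c1 c2.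
by apply/eqP; rewrite -(eqn_pmul2l (isT : 0 < 2)) eqn_leq c1 c2.
Qed.

Theorem lemma6p2 :
  (forall n : nat, 2 <= n -> in_K2 (Kalg n) /\ simple_alg (Kalg n)) /\
  (forall n m : nat, 2 <= n -> 2 <= m -> embeds (Kalg n) (Kalg m) -> n = m).
Proof.
split; first by move=> n hn; split; [exact: inK2 | exact: simpleK].
exact: partB.
Qed.
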